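(* Under the same setting (with $d>k\geq1$, $\varepsilon\in(0,1)$, $A\succeq0$ symmetric with $\lambda_k>\lambda_{k+1}$, $\beta>0$ with $\lambda_k>2\sqrt\beta\geq\lambda_{k+1}$, $X_0\in\mathrm{St}(d,k)$ with $\cos\theta_k(U_k,X_0)>0$, and ANPM perturbations satisfying for all $t\geq0$: $\|U_{-k}^\top\Xi_t\|_2\leq c(\lambda_k-2\sqrt\beta)\varepsilon$ and $\|U_k^\top\Xi_t\|_2\leq c(\lambda_k-2\sqrt\beta)\cos\theta_k(U_k,X_t)$, $c=1/32$), for all $t\geq0$, $$H_t=p_t(\Lambda_{-k})H_0C_t^{-1}+\sum_{s=0}^{t-1}q_s(\Lambda_{-k})\Psi_{t-1-s}C_{t-1-s}C_t^{-1}.$$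
   Context: $A$ has eigenvalues $\lambda_1\geq\dots\geq\lambda_d\geq0$, orthonormal eigenvectors $u_i$; $U_k:=[u_1..u_k]$, $U_{-k}:=[u_{k+1}..u_d]$, $\Lambda_k:=\mathrm{diag}(\lambda_1..\lambda_k)$, $\Lambda_{-k}:=\mathrm{diag}(\lambda_{k+1}..\lambda_d)$. QR: $Y=XR$, $X^\top X=I_k$, $R$ upper triangular, nonnegative diagonal; $\theta_k(U,X):=\arccos\sigma_{\min}(U^\top X)$. ANPM: $(X_1,R_1)=\mathrm{QR}(\tfrac12AX_0+\Xi_0)$; for $t\geq1$, $Y_{t+1}=AX_t-\beta X_{t-1}R_t^{-1}+\Xi_t$, $(X_{t+1},R_{t+1})=\mathrm{QR}(Y_{t+1})$. $H_t:=(U_{-k}^\top X_t)(U_k^\top X_t)^{-1}$; $\Psi_t:=(U_{-k}^\top\Xi_t)(U_k^\top X_t)^{-1}$; $E_t:=\Lambda_k^{-1}(U_k^\top\Xi_t)(U_k^\top X_t)^{-1}$; $G_0:=(I_k/2+E_0)^{-1}$, $G_{t+1}:=(I_k-\beta\Lambda_k^{-1}G_t\Lambda_k^{-1}+E_{t+1})^{-1}$; $C_0:=I_k$, $C_t:=\Lambda_kG_{t-1}^{-1}\Lambda_kG_{t-2}^{-1}\cdots\Lambda_kG_0^{-1}$. Polynomials: $p_0=1$, $p_1(x)=x/2$, $p_{t+1}(x)=xp_t(x)-\beta p_{t-1}(x)$; $q_0=1$, $q_1(x)=x$, $q_{t+1}(x)=xq_t(x)-\beta q_{t-1}(x)$.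 *)

(* Defs.v *)
From HB Require Import structures.
From mathcomp Require Import all_boot all_order all_algebra.
From mathcomp Require Import classical_sets reals.
Set Implicit Arguments. Unset Strict Implicit. Unset Printing Implicit Defensive.
Import Order.TTheory GRing.Theory Num.Theory.
Local Open Scope ring_scope.
Local Open Scope classical_set_scope.

Section Defs.
Variable R : realType.

Definition vnorm n (v : 'cV[R]_n) : R := Num.sqrt (\sum_i v i 0 ^+ 2).

Definition opnorm p q (M : 'M[R]_(p, q)) : R :=
  sup [set vnorm (M *m v) | v in [set v : 'cV[R]_q | vnorm v = 1]].

(* smallest singular value of M (p x q, q <= p): inf_{|v|=1} |M v| *)
Definition smin p q (M : 'M[R]_(p, q)) : R :=
  inf [set vnorm (M *m v) | v in [set v : 'cV[R]_q | vnorm v = 1]].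

(* cos theta_k(U, X) := cos(arccos sigma_min(U^T X)) = sigma_min(U^T X) *)
Definition cos_theta d k (U X : 'M[R]_(d, k)) : R := smin (U^T *m X).

Definition upper_tri k (M : 'M[R]_k) : Prop :=
  forall i j : 'I_k, (j < i)%N -> M i j = 0.

Definition is_QR d k (Y Q : 'M[R]_(d, k)) (Rm : 'M[R]_k) : Prop :=
  [/\ Y = Q *m Rm, Q^T *m Q = 1%:M, upper_tri Rm & forall i, 0 <= Rm i i].

Definition mxpeval n (P : {poly R}) (M : 'M[R]_n) : 'M[R]_n :=
  \sum_(i < size P) P`_i *: M ^+ i.

Fixpoint ppoly (beta : R) (t : nat) : {poly R} * {poly R} :=
  (* returns (p_t, p_{t+1}) *)
  match t with
  | 0 => (1, 2^-1 *: 'X)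
  | t'.+1 => let pr := ppoly beta t' in (pr.2, 'X * pr.2 - beta *: pr.1)
  end.
Definition p_pol beta t := (ppoly beta t).1.

Fixpoint qpoly (beta : R) (t : nat) : {poly R} * {poly R} :=
  match t with
  | 0 => (1, 'X)
  | t'.+1 => let pr := qpoly beta t' in (pr.2, 'X * pr.2 - beta *: pr.1)
  end.
Definition q_pol beta t := (qpoly beta t).1.

Section Iterates.
Variables (k m : nat) (lam : nat -> R) (beta : R) (U : 'M[R]_(k + m))
  (X Xi : nat -> 'M[R]_(k + m, k)).

Definition Uk : 'M[R]_(k + m, k) := lsubmx U.
Definition Umk : 'M[R]_(k + m, m) := rsubmx U.
Definition Lk : 'M[R]_k := diag_mx (\row_(i < k) lam i).
Definition Lmk : 'M[R]_m := diag_mx (\row_(i < m) lam (k + i)%N).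

Definition Hmat t := (Umk^T *m X t) *m invmx (Uk^T *m X t).
Definition Psi t := (Umk^T *m Xi t) *m invmx (Uk^T *m X t).
Definition Emat t := invmx Lk *m (Uk^T *m Xi t) *m invmx (Uk^T *m X t).

Fixpoint Gmat t : 'M[R]_k :=
  match t with
  | 0 => invmx (2^-1%:M + Emat 0)
  | t'.+1 => invmx (1%:M - beta *: (invmx Lk *m Gmat t' *m invmx Lk) + Emat t)
  end.

Fixpoint Cmat t : 'M[R]_k :=
  match t with
  | 0 => 1%:M
  | t'.+1 => Lk *m invmx (Gmat t') *m Cmat t'
  end.
End Iterates.
End Defs.

(* Main.v *)
Require Import Defs.
From HB Require Import structures.
From mathcomp Require Import all_boot all_order all_algebra.
From mathcomp Require Import classical_sets reals.
From mathcomp Require Import ring lra zify.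
Import Order.TTheory GRing.Theory Num.Theory.
Local Open Scope ring_scope.

Set Implicit Arguments. Unset Strict Implicit. Unset Printing Implicit Defensive.

Section Norms.
Variable R : realType.

Lemma CS n (f g : 'I_n -> R) :
  (\sum_i f i * g i) ^+ 2 <= (\sum_i f i ^+ 2) * (\sum_i g i ^+ 2).
Proof.
have H : 0 <= \sum_i \sum_j (f i * g j - f j * g i) ^+ 2.
  by apply: sumr_ge0 => i _; apply: sumr_ge0 => j _; apply: sqr_ge0.
have E : \sum_i \sum_j (f i * g j - f j * g i) ^+ 2 =
   2 * ((\sum_i f i ^+ 2) * (\sum_i g i ^+ 2) - (\sum_i f i * g i) ^+ 2).
  have E1 : forall i j, (f i * g j - f j * g i) ^+ 2 =
     f i ^+ 2 * g j ^+ 2 + f j ^+ 2 * g i ^+ 2 - 2 * ((f i * g i) * (f j * g j)).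
    by move=> i j; ring.
  have E2 : forall i, \sum_j (f i * g j - f j * g i) ^+ 2 =
     f i ^+ 2 * (\sum_j g j ^+ 2) + (\sum_j f j ^+ 2) * g i ^+ 2
       - 2 * ((f i * g i) * (\sum_j f j * g j)).
    move=> i; rewrite (eq_bigr _ (fun j _ => E1 i j)) sumrB big_split /=.
    by rewrite -mulr_sumr -mulr_suml -mulr_sumr -mulr_sumr.
  rewrite (eq_bigr _ (fun i _ => E2 i)) sumrB big_split /=.
  set F := \sum_j f j ^+ 2; set G := \sum_j g j ^+ 2; set C := \sum_j f j * g j.
  rewrite -!mulr_suml -!mulr_sumr -!mulr_suml -/C -/F -/G expr2.
  ring.
rewrite E in H; rewrite -subr_ge0; rewrite pmulr_rge0 // in H.
Qed.

Definition sqn n (v : 'cV[R]_n) := \sum_i v i 0 ^+ 2.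

Lemma sqn_ge0 n (v : 'cV[R]_n) : 0 <= sqn v.
Proof. by apply: sumr_ge0 => i _; apply: sqr_ge0. Qed.

Lemma vnormE n (v : 'cV[R]_n) : vnorm v = Num.sqrt (sqn v).
Proof. by []. Qed.

Lemma vnorm_ge0 n (v : 'cV[R]_n) : 0 <= vnorm v.
Proof. exact: sqrtr_ge0. Qed.

Lemma vnorm_sq n (v : 'cV[R]_n) : vnorm v ^+ 2 = sqn v.
Proof. by rewrite vnormE sqr_sqrtr // sqn_ge0. Qed.

Lemma le_vnorm n (v : 'cV[R]_n) c : 0 <= c -> sqn v <= c ^+ 2 -> vnorm v <= c.
Proof.
move=> c0 h; rewrite vnormE -(ger0_norm c0) -sqrtr_sqr.
exact: ler_wsqrtr.
Qed.

Lemma vnorm_eq0 n (v : 'cV[R]_n) : vnorm v = 0 -> v = 0.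
Proof.
move=> /eqP; rewrite vnormE sqrtr_eq0 => h.
have h0 : sqn v = 0 by apply/eqP; rewrite eq_le h sqn_ge0.
move/eqP: h0; rewrite /sqn psumr_eq0 => [/allP h1|i _]; last exact: sqr_ge0.
apply/matrixP => i j; rewrite (ord1 j) mxE.
by have := h1 i (mem_index_enum _); rewrite sqrf_eq0 => /eqP.
Qed.

Lemma vnorm0 n : vnorm (0 : 'cV[R]_n) = 0.
Proof.
by rewrite vnormE /sqn big1 ?sqrtr0 // => i _; rewrite mxE expr0n.
Qed.

Lemma vnormZ n a (v : 'cV[R]_n) : vnorm (a *: v) = `|a| * vnorm v.
Proof.
rewrite !vnormE /sqn.
have -> : \sum_i (a *: v) i 0 ^+ 2 = a ^+ 2 * \sum_i v i 0 ^+ 2.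
  by rewrite mulr_sumr; apply: eq_bigr => i _; rewrite mxE exprMn.
by rewrite sqrtrM ?sqr_ge0 // sqrtr_sqr.
Qed.

Lemma vnormN n (v : 'cV[R]_n) : vnorm (- v) = vnorm v.
Proof. by rewrite -scaleN1r vnormZ normrN normr1 mul1r. Qed.

Lemma vnormD n (u w : 'cV[R]_n) : vnorm (u + w) <= vnorm u + vnorm w.
Proof.
apply: le_vnorm; first by rewrite addr_ge0 // vnorm_ge0.
have -> : sqn (u + w) = sqn u + sqn w + 2 * \sum_i u i 0 * w i 0.
  rewrite /sqn mulr_sumr -!big_split /=; apply: eq_bigr => i _; rewrite mxE.
  ring.
rewrite sqrrD !vnorm_sq.
have : \sum_i u i 0 * w i 0 <= vnorm u * vnorm w.
  apply: (le_trans (ler_norm _)).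
  rewrite -(sqrtr_sqr (\sum_i _)) !vnormE -sqrtrM ?sqn_ge0 //.
  by apply: ler_wsqrtr; apply: CS.
lra.
Qed.

Lemma vnormB n (u w : 'cV[R]_n) : vnorm u - vnorm w <= vnorm (u - w).
Proof.
have := vnormD (u - w) w; rewrite subrK; lra.
Qed.

Lemma vnorm_mul_le p q (B : 'M[R]_(p, q)) (v : 'cV[R]_q) :
  vnorm (B *m v) <= Num.sqrt (\sum_i \sum_j B i j ^+ 2) * vnorm v.
Proof.
apply: le_vnorm; first by rewrite mulr_ge0 // ?sqrtr_ge0 ?vnorm_ge0.
rewrite exprMn sqr_sqrtr; last first.
  by apply: sumr_ge0 => i _; apply: sumr_ge0 => j _; apply: sqr_ge0.
rewrite vnorm_sq /sqn mulr_suml; apply: ler_sum => i _.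
rewrite mxE; exact: CS.
Qed.

Lemma opnorm_le p q (B : 'M[R]_(p, q)) (v : 'cV[R]_q) :
  vnorm (B *m v) <= opnorm B * vnorm v.
Proof.
have [->|vn0] := eqVneq v 0.
  by rewrite mulmx0 !vnorm0 mulr0.
have hv : 0 < vnorm v.
  rewrite lt_neqAle vnorm_ge0 andbT eq_sym; apply/negP => /eqP/vnorm_eq0 h.
  by rewrite h eqxx in vn0.
set w := (vnorm v)^-1 *: v.
have hw : vnorm w = 1 by rewrite vnormZ ger0_norm ?invr_ge0 ?vnorm_ge0 // mulVf // gt_eqF.
have ub : has_ubound [set vnorm (B *m v) | v in [set v : 'cV[R]_q | vnorm v = 1]].
  exists (Num.sqrt (\sum_i \sum_j B i j ^+ 2)) => _ [x /= hx <-].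
  by have := vnorm_mul_le B x; rewrite hx mulr1.
have := ub_le_sup ub (ex_intro2 _ _ w hw erefl).
rewrite -/(opnorm B) /w -scalemxAr vnormZ ger0_norm ?invr_ge0 ?vnorm_ge0 //.
by rewrite ler_pdivrMl // mulrC.
Qed.

Lemma smin_le p q (M : 'M[R]_(p, q)) (v : 'cV[R]_q) :
  smin M * vnorm v <= vnorm (M *m v).
Proof.
have [->|vn0] := eqVneq v 0.
  by rewrite mulmx0 !vnorm0 mulr0.
have hv : 0 < vnorm v.
  rewrite lt_neqAle vnorm_ge0 andbT eq_sym; apply/negP => /eqP/vnorm_eq0 h.
  by rewrite h eqxx in vn0.
set w := (vnorm v)^-1 *: v.
have hw : vnorm w = 1 by rewrite vnormZ ger0_norm ?invr_ge0 ?vnorm_ge0 // mulVf // gt_eqF.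
have lb : has_lbound [set vnorm (M *m v) | v in [set v : 'cV[R]_q | vnorm v = 1]].
  by exists 0 => _ [x /= hx <-]; apply: vnorm_ge0.
have := ge_inf lb (ex_intro2 _ _ w hw erefl).
rewrite -/(smin M) /w -scalemxAr vnormZ ger0_norm ?invr_ge0 ?vnorm_ge0 //.
by rewrite ler_pdivlMl // mulrC.
Qed.

Lemma vnorm_diag n (d : 'rV[R]_n) D (v : 'cV[R]_n) :
  0 <= D -> (forall i, `|d 0 i| <= D) -> vnorm (diag_mx d *m v) <= D * vnorm v.
Proof.
move=> D0 hd; apply: le_vnorm; first by rewrite mulr_ge0 ?vnorm_ge0.
rewrite exprMn vnorm_sq /sqn mulr_sumr; apply: ler_sum => i _.
rewrite mul_diag_mx mxE exprMn ler_wpM2r ?sqr_ge0 //.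
rewrite -real_normK ?num_real // ler_sqr ?nnegrE ?normr_ge0 //.
Qed.

Lemma unit_of_lb n (M : 'M[R]_n) c : 0 < c ->
  (forall v, c * vnorm v <= vnorm (M *m v)) -> M \in unitmx.
Proof.
move=> c0 h; rewrite -unitmx_tr -row_free_unit; apply: inj_row_free => v hv.
have : M *m v^T = 0 by rewrite -[M]trmxK -trmx_mul hv trmx0.
move=> hM; have := h v^T; rewrite hM vnorm0 => h2.
have : vnorm v^T = 0.
  apply/eqP; rewrite eq_le vnorm_ge0 andbT.
  by rewrite -(pmulr_rle0 _ c0).
by move/vnorm_eq0 => /(congr1 trmx); rewrite trmxK trmx0.
Qed.

End Norms.

Section Poly.
Variable R : realType.

Lemma mxpeval_wid n (P : {poly R}) (M : 'M[R]_n) N : (size P <= N)%N ->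
  mxpeval P M = \sum_(i < N) P`_i *: M ^+ i.
Proof.
move=> hN; rewrite /mxpeval (big_ord_widen N (fun i => P`_i *: M ^+ i) hN).
rewrite big_mkcond /=; apply: eq_bigr => i _.
by case: ltnP => // h; rewrite nth_default // scale0r.
Qed.

Lemma mxpeval_rec n (P Q : {poly R}) c (M : 'M[R]_n) :
  mxpeval ('X * P - c *: Q) M = M *m mxpeval P M - c *: mxpeval Q M.
Proof.
set N := (size ('X * P - c *: Q) + size P + size Q).+1.
rewrite (mxpeval_wid _ (N := N)); last by rewrite /N; lia.
rewrite (mxpeval_wid (P := Q) _ (N := N)); last by rewrite /N; lia.
rewrite (mxpeval_wid (P := P) _ (N := N.-1)); last by rewrite /N; lia.
have -> : \sum_(i < N) ('X * P - c *: Q)`_i *: M ^+ i =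
   \sum_(i < N) ('X * P)`_i *: M ^+ i - c *: \sum_(i < N) Q`_i *: M ^+ i.
  rewrite scaler_sumr -sumrB; apply: eq_bigr => i _.
  by rewrite coefB coefZ scalerBl scalerA.
congr (_ - _).
rewrite /N big_ord_recl /= coefXM /= scale0r add0r mulmx_sumr.
apply: eq_bigr => i _; rewrite coefXM /= -scalemxAr mulmxE -exprS.
by [].
Qed.

Lemma mxpeval1 n (M : 'M[R]_n) : mxpeval 1 M = 1%:M.
Proof.
rewrite (@mxpeval_wid _ 1 M 1%N) ?size_poly1 // big_ord1 coefC /= expr0 scale1r.
by [].
Qed.

Lemma mxpevalZX n c (M : 'M[R]_n) : mxpeval (c *: 'X) M = c *: M.
Proof.
rewrite (@mxpeval_wid _ (c *: 'X) M 2%N); last by rewrite (leq_trans (size_scale_leq _ _)) // size_polyX.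
by rewrite big_ord_recl big_ord1 /= !coefZ coefX coefX /= mulr0 scale0r add0r mulr1 expr1.
Qed.

Lemma mxpevalX n (M : 'M[R]_n) : mxpeval 'X M = M.
Proof. by rewrite -[X in mxpeval X _]scale1r mxpevalZX scale1r. Qed.

Lemma p_pol_rec (beta : R) t : p_pol beta t.+2 = 'X * p_pol beta t.+1 - beta *: p_pol beta t.
Proof. by []. Qed.
Lemma q_pol_rec (beta : R) t : q_pol beta t.+2 = 'X * q_pol beta t.+1 - beta *: q_pol beta t.
Proof. by []. Qed.
Lemma p_pol0 (beta : R) : p_pol beta 0 = 1. Proof. by []. Qed.
Lemma p_pol1 (beta : R) : p_pol beta 1 = 2^-1 *: 'X. Proof. by []. Qed.
Lemma q_pol0 (beta : R) : q_pol beta 0 = 1. Proof. by []. Qed.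
Lemma q_pol1 (beta : R) : q_pol beta 1 = 'X. Proof. by []. Qed.

End Poly.

Lemma block_eig (R : realType) k m (U A : 'M[R]_(k + m)) (lam : nat -> R) :
  U^T *m U = 1%:M -> A = U *m diag_mx (\row_(i < k + m) lam i) *m U^T ->
  (Uk U)^T *m A = Lk k lam *m (Uk U)^T /\ (Umk U)^T *m A = Lmk k m lam *m (Umk U)^T.
Proof.
move=> hU hA.
have hT : U^T *m A = diag_mx (\row_(i < k + m) lam i) *m U^T.
  by rewrite hA !mulmxA hU mul1mx.
have e : U^T = col_mx (Uk U)^T (Umk U)^T by rewrite /Uk /Umk -tr_row_mx hsubmxK.
have drow : \row_(i < k + m) lam i =
    row_mx (\row_(i < k) lam i) (\row_(i < m) lam (k + i)%N).
  apply/rowP => i; rewrite !mxE; case: splitP => j hj; rewrite mxE hj //.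
rewrite e mul_col_mx drow diag_mx_row mul_block_col !mul0mx addr0 add0r in hT.
by case/eq_col_mx: hT.
Qed.

Lemma Linv_eq (R : realType) k (lam : nat -> R) :
  (forall i, (i < k)%N -> lam i != 0) ->
  Lk k lam \in unitmx /\ invmx (Lk k lam) = diag_mx (\row_(i < k) (lam i)^-1).
Proof.
move=> h.
have e : diag_mx (\row_(i < k) (lam i)^-1) *m Lk k lam = 1%:M.
  apply/matrixP => i j; rewrite mul_diag_mx !mxE.
  case: (eqVneq i j) => [->|nij]; last by rewrite mulr0n mulr0.
  by rewrite mulr1n mulVf // h.
have [u1 u2] := mulmx1_unit e.
split => //.
by rewrite -[LHS]mul1mx -e -mulmxA mulmxV // mulmx1.
Qed.

Lemma zmod6 (V : zmodType) (x1 x2 x3 x4 x5 x6 : V) :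
  x1 + (x2 + x3) - (x4 + x5) + x6 = (x1 - x4) + (x6 + (x2 + (x3 - x5))).
Proof.
rewrite opprD !addrA.
rewrite (addrAC _ (-x5) x6) (addrAC _ (-x4) x6) (addrAC _ x3 x6) (addrAC _ x2 x6).
by rewrite (addrAC _ x3 (-x4)) (addrAC _ x2 (-x4)) (addrAC x1 x6 (-x4)).
Qed.

Unset Implicit Arguments.
Set Strict Implicit.

Theorem lemma2 (R : realType) (k m : nat) (eps beta : R) (A U : 'M[R]_(k + m))
  (lam : nat -> R) (X Xi : nat -> 'M[R]_(k + m, k)) (Rm : nat -> 'M[R]_k) :
  (0 < k)%N -> (0 < m)%N ->
  0 < eps < 1 ->
  A^T = A ->
  U^T *m U = 1%:M ->
  A = U *m diag_mx (\row_(i < k + m) lam i) *m U^T ->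
  (forall i j : nat, (i <= j)%N -> (j < k + m)%N -> lam j <= lam i) ->
  (forall i : nat, (i < k + m)%N -> 0 <= lam i) ->
  lam k.-1 > lam k ->
  0 < beta ->
  lam k.-1 > 2 * Num.sqrt beta -> 2 * Num.sqrt beta >= lam k ->
  (X 0)^T *m X 0 = 1%:M ->
  cos_theta (Uk U) (X 0) > 0 ->
  is_QR (2^-1 *: (A *m X 0) + Xi 0) (X 1%N) (Rm 1%N) ->
  (forall t : nat, (1 <= t)%N ->
     is_QR (A *m X t - beta *: (X t.-1 *m invmx (Rm t)) + Xi t)
           (X t.+1) (Rm t.+1)) ->
  (forall t : nat,
     opnorm ((Umk U)^T *m Xi t)
       <= 32^-1 * (lam k.-1 - 2 * Num.sqrt beta) * eps) ->
  (forall t : nat,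
     opnorm ((Uk U)^T *m Xi t)
       <= 32^-1 * (lam k.-1 - 2 * Num.sqrt beta) * cos_theta (Uk U) (X t)) ->
  forall t : nat,
    Hmat U X t =
      mxpeval (p_pol beta t) (Lmk k m lam) *m Hmat U X 0
        *m invmx (Cmat lam beta U X Xi t)
      + \sum_(s < t)
          mxpeval (q_pol beta s) (Lmk k m lam) *m Psi U X Xi (t.-1 - s)
            *m Cmat lam beta U X Xi (t.-1 - s) *m invmx (Cmat lam beta U X Xi t).
Proof.
move=> k0 m0 _ _ hU hA hmono _ _ hb0 hl2s _ _ hcos0 hQR0 hQR _ hXi.
have [UkA UmA] := block_eig hU hA.
set L := Lk k lam. set Lm := Lmk k m lam.
set lam0 := lam k.-1. set s := Num.sqrt beta.
have s0 : 0 < s by rewrite sqrtr_gt0.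
have ss : s ^+ 2 = beta by rewrite sqr_sqrtr // ltW.
have hsl : 2 * s < lam0 := hl2s.
have l0 : 0 < lam0 by lra.
have lamge : forall i, (i < k)%N -> lam0 <= lam i.
  move=> i hi; apply: hmono; lia.
have [Lu Linv] : L \in unitmx /\ invmx L = diag_mx (\row_(i < k) (lam i)^-1).
  apply: Linv_eq => i hi; apply: lt0r_neq0; exact: lt_le_trans l0 (lamge i hi).
have Lbound : forall u : 'cV[R]_k, vnorm (invmx L *m u) <= lam0^-1 * vnorm u.
  move=> u; rewrite Linv; apply: vnorm_diag; first by rewrite invr_ge0 ltW.
  move=> i; rewrite mxE ger0_norm; last by rewrite invr_ge0; have := lamge i (ltn_ord i); lra.
  by rewrite lef_pV2 ?posrE ?lamge //; have := lamge i (ltn_ord i); lra.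
pose a t := (Uk U)^T *m X t. pose b t := (Umk U)^T *m X t.
pose Bk t := (Uk U)^T *m Xi t. pose Bm t := (Umk U)^T *m Xi t.
have reca0 : a 1%N *m Rm 1%N = 2^-1 *: (L *m a 0%N) + Bk 0%N.
  case: hQR0 => hY _ _ _.
  by rewrite /a -mulmxA -hY mulmxDr -scalemxAr !mulmxA UkA.
have recb0 : b 1%N *m Rm 1%N = 2^-1 *: (Lm *m b 0%N) + Bm 0%N.
  case: hQR0 => hY _ _ _.
  by rewrite /b -mulmxA -hY mulmxDr -scalemxAr !mulmxA UmA.
have recaS : forall t, (1 <= t)%N -> a t.+1 *m Rm t.+1 =
    L *m a t - beta *: (a t.-1 *m invmx (Rm t)) + Bk t.
  move=> t ht; case: (hQR t ht) => hY _ _ _.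
  by rewrite /a -mulmxA -hY mulmxDr mulmxBr -scalemxAr !mulmxA UkA.
have recbS : forall t, (1 <= t)%N -> b t.+1 *m Rm t.+1 =
    Lm *m b t - beta *: (b t.-1 *m invmx (Rm t)) + Bm t.
  move=> t ht; case: (hQR t ht) => hY _ _ _.
  by rewrite /b -mulmxA -hY mulmxDr mulmxBr -scalemxAr !mulmxA UmA.

pose Mm t := if t is t'.+1 then
   1%:M - beta *: (invmx L *m Gmat lam beta U X Xi t' *m invmx L) + Emat lam U X Xi t
   else 2^-1%:M + Emat lam U X Xi 0.
have GM : forall t, Gmat lam beta U X Xi t = invmx (Mm t) by case.
set y := s / lam0.
have y0 : 0 < y by rewrite divr_gt0.
have hy : 2 * y < 1.
  by rewrite /y mulrA ltr_pdivrMr // mul1r.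
have Ebound : forall t, a t \in unitmx -> forall v,
    vnorm (Emat lam U X Xi t *m v) <= (1 - 2 * y) / 32 * vnorm v.
  move=> t ht v.
  have -> : Emat lam U X Xi t *m v = invmx L *m (Bk t *m (invmx (a t) *m v)).
    by rewrite /Emat !mulmxA.
  apply: le_trans (Lbound _) _.
  have h1 := opnorm_le (Bk t) (invmx (a t) *m v).
  have h2 : opnorm (Bk t) <= 32^-1 * (lam0 - 2 * s) * smin (a t) := hXi t.
  have h3 := smin_le (a t) (invmx (a t) *m v).
  rewrite mulKVmx // in h3.
  have c0 : 0 <= 32^-1 * (lam0 - 2 * s).
    by apply: mulr_ge0; [rewrite invr_ge0 | lra].
  have h4 : vnorm (Bk t *m (invmx (a t) *m v)) <= 32^-1 * (lam0 - 2 * s) * vnorm v.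
    apply: le_trans h1 _.
    apply: le_trans (ler_wpM2r (vnorm_ge0 _) h2) _.
    rewrite -(mulrA (32^-1 * (lam0 - 2 * s))). have h5 := ler_wpM2l c0 h3. exact h5.
  have e : lam0^-1 * (32^-1 * (lam0 - 2 * s)) = (1 - 2 * y) / 32.
    by rewrite /y; field; rewrite lt0r_neq0.
  by rewrite -e -mulrA; apply: ler_wpM2l => //; rewrite invr_ge0 ltW.
have lbG : forall t v, Mm t \in unitmx ->
    (forall v, y * vnorm v <= vnorm (Mm t *m v)) ->
    vnorm (invmx (Mm t) *m v) <= y^-1 * vnorm v.
  move=> t v hu h; have := h (invmx (Mm t) *m v); rewrite mulKVmx // => h'.
  by rewrite -(ler_pM2l y0) mulrA mulfV ?mul1r // lt0r_neq0.
have vB : forall n (u w : 'cV[R]_n), vnorm u - vnorm w <= vnorm (u + w).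
  by move=> n u w; have := vnormB u (- w); rewrite vnormN opprK.
have fin : forall t, a t \in unitmx ->
    (forall v, y * vnorm v <= vnorm (Mm t *m v)) ->
    a t.+1 *m Rm t.+1 = L *m Mm t *m a t ->
    [/\ a t \in unitmx, a t.+1 \in unitmx, Rm t.+1 \in unitmx,
        (forall v, y * vnorm v <= vnorm (Mm t *m v)) &
        a t.+1 *m Rm t.+1 = L *m Mm t *m a t].
  move=> t hu hl he; have Mu : Mm t \in unitmx := unit_of_lb y0 hl.
  have : a t.+1 *m Rm t.+1 \in unitmx by rewrite he !unitmx_mul Lu Mu hu.
  by rewrite unitmx_mul => /andP[h1 h2]; split.
have inv : forall t,
    [/\ a t \in unitmx, a t.+1 \in unitmx, Rm t.+1 \in unitmx,
        (forall v, y * vnorm v <= vnorm (Mm t *m v)) &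
        a t.+1 *m Rm t.+1 = L *m Mm t *m a t].
  elim => [|t [hu hu1 hR1 hl he]].
    have hu : a 0%N \in unitmx.
      apply: (unit_of_lb (c := smin (a 0%N))) => //.
      exact: smin_le.
    apply: fin => //.
      move=> v; rewrite /Mm mulmxDl mul_scalar_mx.
      apply: le_trans (vB _ _ _).
      rewrite vnormZ ger0_norm ?invr_ge0 //.
      have := Ebound 0%N hu v; have := vnorm_ge0 v; nra.
    rewrite reca0 /Mm mulmxDr !mulmxDl mul_mx_scalar -scalemxAl.
    rewrite !mulmxA mulmxV // mul1mx; congr (_ + _).
    by rewrite -mulmxA mulmxKV.
  have hMu : Mm t \in unitmx := unit_of_lb y0 hl.
  apply: fin => //.
    move=> v; rewrite /Mm GM mulmxDl mulmxBl mul1mx.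
    apply: le_trans (vB _ _ _).
    have hP : vnorm (beta *: (invmx L *m invmx (Mm t) *m invmx L) *m v) <= y * vnorm v.
      rewrite -scalemxAl vnormZ (ger0_norm (ltW hb0)) -!mulmxA.
      have q1 := Lbound (invmx (Mm t) *m (invmx L *m v)).
      have q2 := lbG t (invmx L *m v) hMu hl.
      have q3 := Lbound v.
      have li0 : 0 <= lam0^-1 by rewrite invr_ge0 ltW.
      have yi0 : 0 <= y^-1 by rewrite invr_ge0 ltW.
      have eP : beta * lam0^-1 * y^-1 * lam0^-1 = y.
        rewrite /y -ss; field; rewrite !lt0r_neq0 //.
      have b0 : 0 <= beta by rewrite ltW.
      apply: le_trans (ler_wpM2l b0 q1) _.
      rewrite mulrA; apply: le_trans (ler_wpM2l (mulr_ge0 b0 li0) q2) _.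
      rewrite mulrA; apply: le_trans (ler_wpM2l (mulr_ge0 (mulr_ge0 b0 li0) yi0) q3) _.
      by rewrite mulrA eP.
    have := Ebound t.+1 hu1 v; have := vB _ v (- (beta *: (invmx L *m invmx (Mm t) *m invmx L) *m v)).
    rewrite vnormN; have := vnorm_ge0 v; nra.
  have key : invmx (Mm t) *m invmx L *m a t.+1 = a t *m invmx (Rm t.+1).
    by rewrite -[a t.+1](mulmxK hR1) he !mulmxA mulmxKV // mulVmx // mul1mx.
  have e1 : L *m (beta *: (invmx L *m invmx (Mm t) *m invmx L)) *m a t.+1 =
            beta *: (invmx (Mm t) *m invmx L *m a t.+1).
    by rewrite -scalemxAr -scalemxAl !mulmxA mulmxV // mul1mx.
  have e2 : L *m (invmx L *m Bk t.+1 *m invmx (a t.+1)) *m a t.+1 = Bk t.+1.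
    by rewrite -mulmxA mulmxKV // mulmxA mulmxV // mul1mx.
  rewrite recaS // /Mm GM mulmxDr mulmxBr mulmx1 mulmxDl mulmxBl.
  by rewrite e1 e2 key.

have Hdef : forall t, Hmat U X t = b t *m invmx (a t) by [].
have Pdef : forall t, Psi U X Xi t = Bm t *m invmx (a t) by [].
clearbody a b Bk Bm.
pose C := Cmat lam beta U X Xi.
have Cs : forall t, C t.+1 = L *m Mm t *m C t.
  by move=> t; rewrite /C /= GM invmxK.
have Cu : forall t, C t \in unitmx.
  elim => [|t ih]; first exact: unitmx1.
  rewrite Cs !unitmx_mul Lu ih andbT.
  have [_ _ _ hl _] := inv t; exact: unit_of_lb y0 hl.
have aC : forall t, invmx (a t.+1) *m C t.+1 = Rm t.+1 *m invmx (a t) *m C t.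
  move=> t; have [hu hu1 hR1 hl he] := inv t.
  have e : L *m Mm t = a t.+1 *m Rm t.+1 *m invmx (a t) by rewrite he mulmxK.
  by rewrite Cs e !mulmxA mulVmx // mul1mx.
pose K t := Hmat U X t *m C t.
have KS : forall t, K t.+1 = b t.+1 *m Rm t.+1 *m invmx (a t) *m C t.
  by move=> t; rewrite /K Hdef -mulmxA aC !mulmxA.
have K1 : K 1%N = 2^-1 *: (Lm *m K 0%N) + Psi U X Xi 0 *m C 0%N.
  rewrite KS recb0 /K Hdef Pdef /C /= !mulmx1 mulmxDl -scalemxAl !mulmxA.
  by [].
have K2 : forall t, K t.+2 = Lm *m K t.+1 - beta *: K t + Psi U X Xi t.+1 *m C t.+1.
  move=> t; have [hu hu1 hR1 hl he] := inv t.
  have rb := recbS t.+1 isT; rewrite /= in rb.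
  rewrite KS rb /K !Hdef Pdef !mulmxDl !mulNmx -!scalemxAl.
  congr (_ - _ + _).
    by rewrite !mulmxA.
  by congr (_ *: _); rewrite -!mulmxA aC !mulmxA mulmxKV.
pose Pp t := mxpeval (p_pol beta t) Lm.
pose Qq s := mxpeval (q_pol beta s) Lm.
pose W j := Psi U X Xi j *m C j.
have Pp0 : Pp 0%N = 1%:M by rewrite /Pp p_pol0 mxpeval1.
have Pp1 : Pp 1%N = 2^-1 *: Lm by rewrite /Pp p_pol1 mxpevalZX.
have PpS : forall t, Pp t.+2 = Lm *m Pp t.+1 - beta *: Pp t.
  by move=> t; rewrite /Pp p_pol_rec mxpeval_rec.
have Qq0 : Qq 0%N = 1%:M by rewrite /Qq q_pol0 mxpeval1.
have Qq1 : Qq 1%N = Lm by rewrite /Qq q_pol1 mxpevalX.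
have QqS : forall t, Qq t.+2 = Lm *m Qq t.+1 - beta *: Qq t.
  by move=> t; rewrite /Qq q_pol_rec mxpeval_rec.
have K1' : K 1%N = 2^-1 *: (Lm *m K 0%N) + W 0%N by rewrite K1.
have K2' : forall t, K t.+2 = Lm *m K t.+1 - beta *: K t + W t.+1 by move=> t; rewrite K2.
have Kdef : forall t, K t = Hmat U X t *m C t by [].
have Wdef : forall t, W t = Psi U X Xi t *m C t by [].
have Ppdef : forall t, Pp t = mxpeval (p_pol beta t) Lm by [].
have Qqdef : forall t, Qq t = mxpeval (q_pol beta t) Lm by [].
clearbody K W Pp Qq.
have S : forall t, K t = Pp t *m K 0%N + \sum_(s < t) Qq s *m W (t.-1 - s)%N /\
                   K t.+1 = Pp t.+1 *m K 0%N + \sum_(s < t.+1) Qq s *m W (t - s)%N.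
  elim => [|t [ih1 ih2]].
    split; first by rewrite Pp0 mul1mx big_ord0 addr0.
    by rewrite K1' Pp1 big_ord1 Qq0 mul1mx subn0 -scalemxAl.
  split; first exact: ih2.
  rewrite K2' ih1 ih2 PpS.
  rewrite big_ord_recl [in RHS]big_ord_recl [in RHS]big_ord_recl /bump /=.
  rewrite Qq0 Qq1 !mul1mx !subn0.
  have e : \sum_(i < t) Qq (1 + (1 + i))%N *m W (t.+1 - (1 + (1 + i)))%N =
     Lm *m \sum_(i < t) Qq (1 + i)%N *m W (t - (1 + i))%N -
     beta *: \sum_(s < t) Qq s *m W (t.-1 - s)%N.
    rewrite mulmx_sumr scaler_sumr -sumrB; apply: eq_bigr => i _.
    rewrite !add1n QqS.
    have -> : (t.+1 - i.+2 = t - i.+1)%N by lia.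
    have -> : (t.-1 - i = t - i.+1)%N by lia.
    by rewrite mulmxBl -scalemxAl mulmxA.
  rewrite e mulmxBl -scalemxAl !mulmxDr !mulmxA /bump /= !add1n subSS subn0.
  by rewrite scalerDr zmod6.
move=> t.
have e : Hmat U X t = K t *m invmx (C t) by rewrite Kdef mulmxK.
rewrite e (S t).1 mulmxDl mulmx_suml Kdef Ppdef /C /= mulmx1.
congr (_ + _); apply: eq_bigr => i _.
by rewrite Wdef Qqdef !mulmxA.
Qed.
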